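(* Let $1>\delta_1>\delta_2>0$ with $\delta_2<0.5$, and let $c:\mathbb{Z}^2\to\{0,1\}$ be a deterministic function such that for all $x,n$ it is never the case that $c(x,n)=c(x+1,n)=1$. Let $Z(n)$, $n\ge0$, be the random walk on $\mathbb{Z}$ with $Z(0)=0$ and the following transitions: if $Z(n)=x$ and $c(x,n)=c(x-1,n)=0$ then $Z(n+1)=x$; if $c(x,n)=1$ then $Z(n+1)=x+1$ with probability $\delta_1$ and $Z(n+1)=x$ otherwise; if $c(x-1,n)=1$ then $Z(n+1)=x-1$ with probability $\delta_2$ and $Z(n+1)=x$ otherwise. Let $\theta:=\frac{\delta_1\wedge0.5-\delta_2}{\delta_1\wedge0.5+\delta_2}>0$. Then for all $n\ge0$ and all integers $k\ge0$, $$\mathbb{P}[Z(n)\le-k]\le\mathrm{e}^{-\theta k}.$$ *)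

(* Defs.v *)
From Stdlib Require Import Reals ZArith Lra.
From Coquelicot Require Import Coquelicot.
Open Scope R_scope.

(* Environment c : Z^2 -> {0,1}, encoded as bool (true = 1). *)

Definition p_up (d1 : R) (c : Z -> Z -> bool) (x : Z) (n : nat) : R :=
  if c x (Z.of_nat n) then d1 else 0.
Definition p_down (d2 : R) (c : Z -> Z -> bool) (x : Z) (n : nat) : R :=
  if c (x - 1)%Z (Z.of_nat n) then d2 else 0.
Definition p_stay (d1 d2 : R) (c : Z -> Z -> bool) (x : Z) (n : nat) : R :=
  1 - p_up d1 c x n - p_down d2 c x n.

(* law d1 d2 c n y = P[Z(n) = y], defined by the Chapman–Kolmogorov
   recursion of the Markov chain started at Z(0) = 0. *)
Fixpoint law (d1 d2 : R) (c : Z -> Z -> bool) (n : nat) (y : Z) : R :=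
  match n with
  | O => if Z.eqb y 0 then 1 else 0
  | S m => law d1 d2 c m y * p_stay d1 d2 c y m
         + law d1 d2 c m (y - 1)%Z * p_up d1 c (y - 1)%Z m
         + law d1 d2 c m (y + 1)%Z * p_down d2 c (y + 1)%Z m
  end.

(* P[Z(n) <= -k] = sum over all y <= -k, i.e. y = -k - j, j >= 0. *)
Definition prob_le_neg (d1 d2 : R) (c : Z -> Z -> bool) (n k : nat) : R :=
  Series (fun j : nat => law d1 d2 c n (- Z.of_nat k - Z.of_nat j)%Z).

Definition theta (d1 d2 : R) : R :=
  (Rmin d1 (1/2) - d2) / (Rmin d1 (1/2) + d2).

(* Main.v *)
Require Import Defs.
From Stdlib Require Import Reals ZArith.
From Coquelicot Require Import Coquelicot.
From Stdlib Require Import Lra Lia.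
Open Scope R_scope.

Definition ez (h : Z -> R) := exists L : Z, forall y, (y < L)%Z -> h y = 0.
Definition S_ (h : Z -> R) (m : Z) := Series (fun j : nat => h (m - Z.of_nat j)%Z).

Lemma ex0 : ex_series (fun _ : nat => 0).
Proof.
  exists 0.
  assert (H := is_series_scal_r 0 _ _ (is_series_geom 0 ltac:(rewrite Rabs_R0; lra))).
  eapply is_series_ext; [|rewrite Rmult_0_r in H; exact H].
  intros n; simpl; ring.
Qed.

Lemma ez_ex h m : ez h -> ex_series (fun j : nat => h (m - Z.of_nat j)%Z).
Proof.
  intros [L HL].
  apply (ex_series_incr_n _ (Z.to_nat (m - L + 1))).
  apply ex_series_ext with (fun _ => 0); [|apply ex0].
  intros k; symmetry; apply HL; lia.
Qed.

Lemma S_incr h m : ez h -> S_ h m = h m + S_ h (m - 1)%Z.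
Proof.
  intros E; unfold S_. rewrite Series_incr_1 by (apply ez_ex; auto).
  f_equal; [f_equal; simpl; lia|].
  apply Series_ext; intros k; f_equal; lia.
Qed.

Lemma S_plus h1 h2 m : ez h1 -> ez h2 ->
  S_ (fun y => h1 y + h2 y) m = S_ h1 m + S_ h2 m.
Proof. intros; unfold S_; apply Series_plus; apply ez_ex; auto. Qed.

Lemma S_minus h1 h2 m : ez h1 -> ez h2 ->
  S_ (fun y => h1 y - h2 y) m = S_ h1 m - S_ h2 m.
Proof. intros; unfold S_; apply Series_minus; apply ez_ex; auto. Qed.

Lemma ez_plus h1 h2 : ez h1 -> ez h2 -> ez (fun y => h1 y + h2 y).
Proof.
  intros [L1 H1] [L2 H2]; exists (Z.min L1 L2); intros y Hy.
  rewrite H1, H2 by lia; ring.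
Qed.
Lemma ez_minus h1 h2 : ez h1 -> ez h2 -> ez (fun y => h1 y - h2 y).
Proof.
  intros [L1 H1] [L2 H2]; exists (Z.min L1 L2); intros y Hy.
  rewrite H1, H2 by lia; ring.
Qed.
Lemma ez_opp h : ez h -> ez (fun y => - h y).
Proof. intros [L H]; exists L; intros y Hy; rewrite H by lia; ring. Qed.
Lemma ez_mul h (g : Z -> R) : ez h -> ez (fun y => h y * g y).
Proof. intros [L H]; exists L; intros y Hy; rewrite H by lia; ring. Qed.
Lemma ez_shift h s : ez h -> ez (fun y => h (y + s)%Z).
Proof. intros [L H]; exists (L - s)%Z; intros y Hy; apply H; lia. Qed.

Lemma S_shift h s m : S_ (fun y => h (y + s)%Z) m = S_ h (m + s)%Z.
Proof. unfold S_; apply Series_ext; intros k; f_equal; lia. Qed.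

Section Main.
Variables (d1 d2 : R) (c : Z -> Z -> bool).

Lemma law_zero n y : (y < - Z.of_nat n)%Z -> law d1 d2 c n y = 0.
Proof.
  revert y; induction n as [|n IH]; intros y Hy; simpl.
  - destruct (Z.eqb_spec y 0); [lia|reflexivity].
  - rewrite !IH by lia; ring.
Qed.

Lemma law_ez n : ez (law d1 d2 c n).
Proof. exists (- Z.of_nat n)%Z; apply law_zero. Qed.

Lemma step n m :
  S_ (law d1 d2 c (S n)) m =
  S_ (law d1 d2 c n) m - law d1 d2 c n m * p_up d1 c m n
  + law d1 d2 c n (m + 1)%Z * p_down d2 c (m + 1)%Z n.
Proof.
  set (l := law d1 d2 c n).
  set (f := fun y => l y * p_up d1 c y n).
  set (g := fun y => l y * p_down d2 c y n).
  assert (El : ez l) by apply law_ez.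
  assert (Ef : ez f) by (apply ez_mul; auto).
  assert (Eg : ez g) by (apply ez_mul; auto).
  transitivity (S_ (fun y => (((l y - f y) - g y) + f (y + -1)%Z) + g (y + 1)%Z) m).
  { unfold S_; apply Series_ext; intros k. simpl law. unfold f, g, l, p_stay.
    replace (m - Z.of_nat k + -1)%Z with (m - Z.of_nat k - 1)%Z by lia. ring. }
  rewrite S_plus, S_plus, S_minus, S_minus;
    repeat first [apply ez_plus | apply ez_minus | apply ez_shift | apply ez_opp | assumption].
  rewrite !S_shift.
  rewrite (S_incr f m Ef), (S_incr g (m + 1)%Z Eg).
  replace (m + -1)%Z with (m - 1)%Z by lia.
  replace (m + 1 - 1)%Z with m by lia.
  unfold f, g. ring.
Qed.

End Main.

Lemma key_exp (a d2 : R) : 0 < d2 -> d2 < a ->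
  d2 * exp ((a - d2) / (a + d2)) <= a.
Proof.
  intros H0 H1.
  set (u := d2 / a).
  assert (Ha : 0 < a) by lra.
  assert (Hu : 0 < u) by (unfold u; apply Rdiv_lt_0_compat; lra).
  assert (Hua : u * a = d2) by (unfold u; field; lra).
  assert (Ht : (a - d2) / (a + d2) <= 1 - u).
  { replace (1 - u) with ((a - d2) / a) by (unfold u; field; lra).
    unfold Rdiv. apply Rmult_le_compat_l; [lra|].
    apply Rinv_le_contravar; lra. }
  assert (E1 : exp ((a - d2) / (a + d2)) <= exp (1 - u)).
  { destruct (Req_dec ((a - d2) / (a + d2)) (1 - u)) as [E|E];
      [rewrite E; lra| left; apply exp_increasing; lra]. }
  assert (E2 : u <= exp (u - 1)) by (generalize (exp_ineq1_le (u - 1)); lra).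
  assert (E3 : exp (1 - u) * exp (u - 1) = 1) by (rewrite <- exp_plus; replace (1 - u + (u - 1)) with 0 by ring; apply exp_0).
  assert (E4 : u * exp (1 - u) <= 1).
  { assert (u * exp (1 - u) <= exp (u - 1) * exp (1 - u)) by (apply Rmult_le_compat_r; [left; apply exp_pos|lra]).
    lra. }
  assert (d2 * exp ((a - d2) / (a + d2)) = u * a * exp ((a - d2) / (a + d2))) by (rewrite Hua; ring).
  assert (u * a * exp ((a - d2) / (a + d2)) <= u * a * exp (1 - u))
    by (apply Rmult_le_compat_l; nra).
  assert (a * (u * exp (1 - u)) <= a * 1) by (apply Rmult_le_compat_l; lra).
  nra.
Qed.

Theorem lemmaA1 (d1 d2 : R) (c : Z -> Z -> bool)
  (Hd1 : d1 < 1) (Hd12 : d2 < d1) (Hd2 : 0 < d2) (Hd2h : d2 < 1/2)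
  (Hc : forall x n : Z, ~ (c x n = true /\ c (x + 1)%Z n = true)) :
  forall n k : nat, prob_le_neg d1 d2 c n k <= exp (- theta d1 d2 * INR k).
Proof.
  set (a := Rmin d1 (1/2)).
  assert (Ha1 : a <= d1) by apply Rmin_l.
  assert (Ha2 : a <= 1/2) by apply Rmin_r.
  assert (Ha3 : d2 < a) by (unfold a, Rmin; destruct Rle_dec; lra).
  set (th := theta d1 d2).
  assert (Hth : th = (a - d2) / (a + d2)) by reflexivity.
  assert (Hth0 : 0 <= th) by (rewrite Hth; apply Rdiv_le_0_compat; lra).
  set (r := exp th).
  assert (Hr1 : 1 <= r) by (unfold r; rewrite <- exp_0;
    destruct Hth0 as [H|H]; [left; apply exp_increasing; auto| rewrite H; lra]).
  assert (Hr2 : d2 * r <= a) by (unfold r; rewrite Hth; apply key_exp; lra).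
  set (b := fun m : Z => exp (th * IZR (Z.min m 0))).
  assert (Hkey : forall m, (1 - a - d2) * b m + a * b (m - 1)%Z + d2 * b (m + 1)%Z <= b m).
  { intros m. unfold b. destruct (Z_lt_le_dec 0 m).
    - rewrite !Z.min_r by lia. lra.
    - rewrite Z.min_l by lia. rewrite (Z.min_l (m - 1)) by lia.
      set (B := exp (th * IZR m)).
      assert (HB : 0 < B) by apply exp_pos.
      assert (Em1 : exp (th * IZR (m - 1)) = B * / r).
      { unfold B, r. rewrite minus_IZR. replace (th * (IZR m - 1)) with (th * IZR m + - th) by ring.
        rewrite exp_plus, exp_Ropp. reflexivity. }
      assert (Ep1 : exp (th * IZR (Z.min (m + 1) 0)) <= B * r).
      { unfold B, r. rewrite <- exp_plus.
        assert (IZR (Z.min (m + 1) 0) <= IZR m + 1) by (rewrite <- plus_IZR; apply IZR_le; lia).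
        assert (th * IZR (Z.min (m + 1) 0) <= th * IZR m + th) by nra.
        destruct (Req_dec (th * IZR (Z.min (m + 1) 0)) (th * IZR m + th)) as [E|E];
          [rewrite E; lra| left; apply exp_increasing; lra]. }
      rewrite Em1.
      set (s := / r).
      assert (Hs : r * s = 1) by (unfold s; field; lra).
      assert (Hs0 : 0 < s) by (unfold s; apply Rinv_0_lt_compat; lra).
      assert (Hs1 : s <= 1) by (unfold s; rewrite <- Rinv_1; apply Rinv_le_contravar; lra).
      assert (d2 * exp (th * IZR (Z.min (m + 1) 0)) <= d2 * (B * r)) by (apply Rmult_le_compat_l; lra).
      assert (H1 : (a - d2 * r) * (1 - s) >= 0) by nra.
      assert (H2 : d2 = d2 * r * s) by (rewrite Rmult_assoc, Hs; ring).
      assert (H3 : a * s + d2 * r - a - d2 <= 0) by nra.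
      nra. }
  assert (Main : forall n, (forall y, 0 <= law d1 d2 c n y) /\
                           (forall m, S_ (law d1 d2 c n) m <= b m)).
  { induction n as [|n [IHp IHb]].
    - split.
      + intros y; simpl; destruct (Z.eqb y 0); lra.
      + assert (Hneg : forall m, (m < 0)%Z -> S_ (law d1 d2 c 0) m = 0).
        { intros m Hm. unfold S_. 
          assert (H := is_series_scal_r 0 _ _ (is_series_geom 0 ltac:(rewrite Rabs_R0; lra))).
          rewrite Rmult_0_r in H. apply is_series_unique.
          eapply is_series_ext; [|exact H]. intros j; simpl.
          destruct (Z.eqb_spec (m - Z.of_nat j) 0); [lia|ring]. }
        assert (Hpos : forall k : nat, S_ (law d1 d2 c 0) (Z.of_nat k) = 1).
        { induction k as [|k IHk].
          - rewrite S_incr by apply law_ez. rewrite Hneg by lia. simpl. lra.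
          - rewrite S_incr by apply law_ez.
            replace (Z.of_nat (S k) - 1)%Z with (Z.of_nat k) by lia. rewrite IHk.
            simpl. destruct (Z.eqb_spec (Z.pos (Pos.of_succ_nat k)) 0); [lia|lra]. }
        intros m. destruct (Z_lt_le_dec m 0).
        * rewrite Hneg by auto. unfold b. left; apply exp_pos.
        * replace m with (Z.of_nat (Z.to_nat m)) by lia. rewrite Hpos.
          unfold b. rewrite Z.min_r by lia. rewrite Rmult_0_r, exp_0. lra.
    - split.
      + intros y. simpl.
        assert (Hst : 0 <= p_stay d1 d2 c y n).
        { unfold p_stay, p_up, p_down.
          destruct (c y (Z.of_nat n)) eqn:E1; destruct (c (y - 1)%Z (Z.of_nat n)) eqn:E2; try lra.
          exfalso; apply (Hc (y - 1)%Z (Z.of_nat n)).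
          replace (y - 1 + 1)%Z with y by lia. auto. }
        assert (0 <= p_up d1 c (y - 1)%Z n) by (unfold p_up; destruct c; lra).
        assert (0 <= p_down d2 c (y + 1)%Z n) by (unfold p_down; destruct c; lra).
        assert (H1 := IHp y). assert (H2 := IHp (y - 1)%Z). assert (H3 := IHp (y + 1)%Z).
        assert (0 <= law d1 d2 c n y * p_stay d1 d2 c y n) by (apply Rmult_le_pos; auto).
        assert (0 <= law d1 d2 c n (y - 1) * p_up d1 c (y - 1) n) by (apply Rmult_le_pos; auto).
        assert (0 <= law d1 d2 c n (y + 1) * p_down d2 c (y + 1) n) by (apply Rmult_le_pos; auto).
        lra.
      + intros m. rewrite step. unfold p_up, p_down.
        replace (m + 1 - 1)%Z with m by lia.
        destruct (c m (Z.of_nat n)).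
        * assert (Hl : law d1 d2 c n m = S_ (law d1 d2 c n) m - S_ (law d1 d2 c n) (m - 1)%Z)
            by (rewrite (S_incr _ m) by apply law_ez; ring).
          assert (Hl' : law d1 d2 c n (m + 1)%Z = S_ (law d1 d2 c n) (m + 1)%Z - S_ (law d1 d2 c n) m)
            by (rewrite (S_incr _ (m + 1)%Z) by apply law_ez; replace (m + 1 - 1)%Z with m by lia; ring).
          assert (P0 := IHp m).
          assert (B0 := IHb m). assert (B1 := IHb (m - 1)%Z). assert (B2 := IHb (m + 1)%Z).
          assert (K := Hkey m).
          assert (Q1 : 0 <= (d1 - a) * law d1 d2 c n m) by (apply Rmult_le_pos; lra).
          assert (Q2 : 0 <= (1 - a - d2) * (b m - S_ (law d1 d2 c n) m)) by (apply Rmult_le_pos; lra).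
          assert (Q3 : 0 <= a * (b (m - 1)%Z - S_ (law d1 d2 c n) (m - 1)%Z)) by (apply Rmult_le_pos; lra).
          assert (Q4 : 0 <= d2 * (b (m + 1)%Z - S_ (law d1 d2 c n) (m + 1)%Z)) by (apply Rmult_le_pos; lra).
          rewrite Hl'. rewrite Hl in Q1 |- *. nra.
        * assert (B0 := IHb m). lra. }
  intros n k.
  destruct (Main n) as [_ Hb].
  assert (H := Hb (- Z.of_nat k)%Z).
  unfold prob_le_neg. unfold S_ in H.
  eapply Rle_trans; [exact H|].
  unfold b. rewrite Z.min_l by lia. rewrite opp_IZR, <- INR_IZR_INZ.
  right; f_equal; unfold th; ring.
Qed.
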